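(* Let $G$ be an $H(4,3)$-free graph with $m$ edges, $\rho=\rho(G)$, and $u^*\in V(G)$. Put $N=N(u^* )$, $W=V(G)\setminus N[u^*]$, $A^{+}=\{v\in N: v\text{ has a neighbor in }N\}$. Assume: $G[A^{+}]\cong K_4$; $e(W)=2$; every vertex of $W$ has at most one neighbor in $A^{+}$ and at least one neighbor in $W$; and \[ \rho^2-\rho\Bigl(e(A^{+})-|A^{+}|+\tfrac32-e(W)\Bigr)<2e(A^{+})+|A^{+}|+e(A^{+},W). \] Then $\rho^2-\frac32\rho<18$. Consequently, if $m\ge 24$ is even, then $\rho(G)<\rho'(m)$.
   Context: $H(4,3)$ is the graph obtained from a $4$-cycle and a triangle by identifying one vertex of the $4$-cycle with one vertex of the triangle; $H(4,3)$-free means containing no subgraph isomorphic to $H(4,3)$. $N[u^*]=N(u^* )\cup\{u^*\}$. For a vertex set $X$, $e(X)$ is the number of edges of the induced subgraph $G[X]$; for disjoint $X,Y$, $e(X,Y)$ is the number of edges between $X$ and $Y$. $\rho(G)$ is the adjacency spectral radius. For even $m$, $\rho'(m)$ is the largest real root of $p_m(x)=x^4-mx^2-(m-2)x+\frac{m}{2}-1$; it is known that $\rho'(m)>L_m:=\frac{1+\sqrt{4m-5}}{2}$ for even $m\ge 6$. *)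

(* Defs.v *)
From HB Require Import structures.
From mathcomp Require Import all_boot all_order all_algebra all_field.
Set Implicit Arguments. Unset Strict Implicit. Unset Printing Implicit Defensive.
Import Order.TTheory GRing.Theory Num.Theory.
Local Open Scope ring_scope.

Section Graphs.
Variable n : nat.
Variable adj : rel 'I_n.

Definition simple_graph : Prop := symmetric adj /\ irreflexive adj.

Definition nbhd (u : 'I_n) : {set 'I_n} := [set v | adj u v].

Definition edges_in (X : {set 'I_n}) : nat :=
  #|[set p : 'I_n * 'I_n | [&& (p.1 < p.2)%N, p.1 \in X, p.2 \in X & adj p.1 p.2]]|.

(* e(X,Y): number of edges between X and Y (X, Y disjoint) *)
Definition edges_between (X Y : {set 'I_n}) : nat :=
  #|[set p : 'I_n * 'I_n | [&& p.1 \in X, p.2 \in Y & adj p.1 p.2]]|.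

Definition nedges : nat := edges_in [set: 'I_n].

(* H(4,3): a 4-cycle v-a-b-c-v and a triangle v-d-f sharing the vertex v;
   H(4,3)-free = no (not necessarily induced) subgraph isomorphic to it *)
Definition H43_free : Prop :=
  ~ exists v a b c d f : 'I_n,
      [/\ uniq [:: v; a; b; c; d; f],
          [&& adj v a, adj a b, adj b c & adj c v] &
          [&& adj v d, adj d f & adj f v]].

Definition induces_K4 (X : {set 'I_n}) : Prop :=
  #|X| = 4%N /\ {in X &, forall x y, x != y -> adj x y}.

Definition adjmx : 'M[algC]_n := \matrix_(i, j) (adj i j)%:R.

Definition is_spectral_radius (r : algC) : Prop :=
  (exists2 l : algC, eigenvalue adjmx l & `|l| = r) /\
  (forall l : algC, eigenvalue adjmx l -> `|l| <= r).

End Graphs.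

Definition pm (m : nat) : {poly algC} :=
  'X^4 - (m%:R : algC) *: 'X^2 - ((m%:R : algC) - 2) *: 'X
  + ((m%:R : algC) / 2 - 1)%:P.

Definition is_rho' (m : nat) (r : algC) : Prop :=
  [/\ r \is Num.real, root (pm m) r &
      forall x : algC, x \is Num.real -> root (pm m) x -> x <= r].

(* Main.v *)
Require Import Defs.
From HB Require Import structures.
From mathcomp Require Import all_boot all_order all_algebra all_field.
From mathcomp Require Import zify ring lra.
Import Order.TTheory GRing.Theory Num.Theory.


Ltac split_ands := repeat match goal with H : is_true (_ && _) |- _ => case/andP: H => ? ? end.
Section C.
Variable n : nat.
Implicit Types X : {set 'I_n}.

Lemma pairs_count X :
  (#|[set p in setX X X | (p.1 < p.2)%N]| * 2 + #|X| = #|X| ^ 2)%N.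
Proof.
set A := setX X X.
set L := [set p : 'I_n * 'I_n | (p.1 < p.2)%N].
set E := [set p : 'I_n * 'I_n | p.1 == p.2].
have e1 : [set p in A | (p.1 < p.2)%N] = A :&: L.
  by apply/setP => p; rewrite !inE.
have hA : #|A| = (#|X| ^ 2)%N by rewrite cardsX expnS expn1.
rewrite -hA -(cardsID L A) -(cardsID E (A :\: L)) e1.
pose sw (p : 'I_n * 'I_n) := (p.2, p.1).
have swK : cancel sw sw by case.
have e2 : (A :\: L) :\: E = sw @: (A :&: L).
  rewrite (can2_imset_pre _ swK swK); apply/setP => -[x y]; rewrite !inE /=.
  rewrite -(inj_eq val_inj) /=; by case: (x \in X); case: (y \in X); rewrite ?andbF //=; case: ltngtP.
have e3 : (A :\: L) :&: E = (fun x => (x, x)) @: X.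
  apply/setP => -[x y]; rewrite !inE /=; apply/idP/imsetP.
    by case/andP => /and3P [_ xX _] /eqP <-; exists x.
  by case=> z zX [-> ->]; rewrite eqxx ltnn zX.
rewrite e2 e3 card_imset; last by move=> x y h; exact: (f_equal fst h).
rewrite card_imset; last by move=> [a b] [c d] h; exact: (f_equal sw h).
set k := #|A :&: L|; set l := #|X|; lia.
Qed.

Variable adj : rel 'I_n.

Lemma edges_K4 X : induces_K4 adj X -> edges_in adj X = 6%N.
Proof.
case=> cX hX.
have : edges_in adj X = #|[set p in setX X X | (p.1 < p.2)%N]|.
  rewrite /edges_in; apply: eq_card => -[x y]; rewrite !inE /=.
  case: (ltnP x y) => //= xy; case xX: (x \in X); case yX: (y \in X) => //=.
  apply: hX => //; by rewrite neq_ltn xy.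
have := pairs_count X; rewrite cX; lia.
Qed.
End C.
Section C2.
Variable n : nat.
Implicit Types X : {set 'I_n}.

Lemma others2 X a b : #|X| = 4%N -> a \in X -> b \in X -> a != b ->
  exists c d, [/\ c \in X, d \in X & uniq [:: a; b; c; d]].
Proof.
move=> cX aX bX ab.
have c2 : #|X :\ a :\ b| = 2%N.
  move: cX; rewrite (cardsD1 a) aX (cardsD1 b (X :\ a)) !inE eq_sym ab bX /=.
  lia.
have /cards2P [c [d [cd E]]] : #|X :\ a :\ b| == 2%N by rewrite c2.
have cin : c \in X :\ a :\ b by rewrite E !inE eqxx.
have din : d \in X :\ a :\ b by rewrite E !inE eqxx orbT.
move: cin din; rewrite !inE => /and3P [cb ca cX'] /and3P [db da dX'].
exists c, d; split => //=; rewrite !inE !negb_or.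
by rewrite ab eq_sym ca eq_sym da eq_sym cb eq_sym db cd.
Qed.

Lemma others3 X a : #|X| = 4%N -> a \in X ->
  exists b c d, [/\ b \in X, c \in X, d \in X & uniq [:: a; b; c; d]].
Proof.
move=> cX aX.
have : (0 < #|X :\ a|)%N by move: cX; rewrite (cardsD1 a) aX; lia.
rewrite card_gt0 => /set0Pn [b]; rewrite !inE => /andP [ba bX].
have ab : a != b by rewrite eq_sym.
have [c [d [cX' dX' u]]] := @others2 X a b cX aX bX ab.
by exists b, c, d.
Qed.
End C2.
Section C3.
Variable n : nat.
Variable adj : rel 'I_n.
Implicit Types X : {set 'I_n}.
Lemma noBB (Ap W : {set 'I_n}) (sym : symmetric adj) (Hf : H43_free adj) (K : induces_K4 adj Ap)
  (disj : forall x, x \in W -> x \notin Ap) w w' a b :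
  w \in W -> w' \in W -> adj w w' -> a \in Ap -> b \in Ap -> adj w a -> adj w' b -> w != w' -> False.
Proof.
move=> wW w'W ww' aA bA wa w'b neqw.
case: K => cA kadj.
have nW : forall x y, x \in W -> y \in Ap -> x != y.
  by move=> x y xW yA; apply: contraNneq (disj x xW) => ->.
have nwa := nW _ _ wW aA; have nw'a := nW _ _ w'W aA.
have nwb := nW _ _ wW bA; have nw'b := nW _ _ w'W bA.
apply: Hf.
case: (eqVneq a b) => [eab|ab].
  subst b; clear bA nwb nw'b.
  have [b [c [d [bA cA' dA u]]]] := @others3 _ Ap a cA aA.
  have nwb' := nW _ _ wW bA; have nw'b' := nW _ _ w'W bA.
  have nwc := nW _ _ wW cA'; have nw'c := nW _ _ w'W cA'.
  have nwd := nW _ _ wW dA; have nw'd := nW _ _ w'W dA.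
  move: u; rewrite /= !inE !negb_or => u; split_ands.
  exists a, b, c, d, w, w'; split.
  - rewrite /= !inE !negb_or; repeat (apply/andP; split); try done; by rewrite eq_sym.
  - repeat (apply/andP; split); apply: kadj => //; by rewrite eq_sym.
  - by rewrite sym wa ww' w'b.
have [c [d [cA' dA u]]] := @others2 _ Ap a b cA aA bA ab.
have nwc := nW _ _ wW cA'; have nw'c := nW _ _ w'W cA'.
have nwd := nW _ _ wW dA; have nw'd := nW _ _ w'W dA.
move: u; rewrite /= !inE !negb_or => u; split_ands.
exists a, w, w', b, c, d; split.
- rewrite /= !inE !negb_or; repeat (apply/andP; split); try done; by rewrite eq_sym.
- rewrite sym wa ww' w'b /=; apply: kadj => //; by rewrite eq_sym.
- repeat (apply/andP; split); apply: kadj => //; by rewrite eq_sym.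
Qed.


Lemma eAW_le (Ap W : {set 'I_n}) : symmetric adj -> irreflexive adj -> H43_free adj ->
  induces_K4 adj Ap -> (forall x, x \in W -> x \notin Ap) ->
  edges_in adj W = 2%N ->
  (forall w, w \in W ->
     (#|[set a in Ap | adj w a]| <= 1)%N /\ (exists2 w', w' \in W & adj w w')) ->
  (edges_between adj Ap W <= 2)%N.
Proof.
move=> sym irr Hf K disj e2 hW.
have NB := noBB Ap W sym Hf K disj.
pose g w := odflt w [pick w' in W | adj w w'].
have gP : forall w, w \in W -> g w \in W /\ adj w (g w).
  move=> w wW; rewrite /g; case: pickP => [w' /andP [? ?]|none] //=.
  have [_ [w' w'W ww']] := hW w wW.
  by have := none w'; rewrite w'W ww'.
pose f (p : 'I_n * 'I_n) := if (p.2 < g p.2)%N then (p.2, g p.2) else (g p.2, p.2).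
rewrite -e2 /edges_between /edges_in.
set E := [set p | _].
set S := [set p | _].
have cE : #|f @: E| = #|E|.
  apply: card_in_imset => -[a w] [a' w']; rewrite !inE /=.
  move=> /and3P [aA wW aw] /and3P [a'A w'W a'w'] hf.
  have h1 := congr1 fst hf; have h2 := congr1 snd hf.
  rewrite /f /= in h1 h2.
  have [gW wg] := gP w wW; have [gW' wg'] := gP w' w'W.
  have ww' : w = w'.
    move: h1 h2; case: ifP => _; case: ifP => _ //= h1 h2.
    - exfalso; apply: (NB w w' a a') => //; first by rewrite -h2.
        by rewrite sym.
        by rewrite sym.
      by apply/eqP => h; move: wg; rewrite h2 -h irr.
    - exfalso; apply: (NB w w' a a') => //; first by rewrite -h1.
        by rewrite sym.
        by rewrite sym.
      by apply/eqP => h; move: wg; rewrite h1 -h irr.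
  subst w'.
  have [le1 _] := hW w wW.
  move/card_le1_eqP: le1.
  move=> H; have -> // : a = a'.
  symmetry; apply: (H a a'); by rewrite !inE ?aA ?a'A sym ?aw ?a'w'.
rewrite -cE; apply: subset_leq_card; apply/subsetP => q /imsetP [[a w]].
rewrite /E inE /= => /and3P [aA wW aw] ->.
have [gW wg] := gP w wW.
rewrite /f /=; case: ifP => lt; rewrite !inE /= ?lt ?wW ?gW ?wg //=.
have ne : g w != w by apply/eqP => h; move: wg; rewrite h irr.
by rewrite sym wg andbT ltn_neqAle leqNgt lt andbT.
Qed.
End C3.
Local Open Scope ring_scope.
Lemma algR_lt (x y : algR) : (x < y) = (algRval x < algRval y).
Proof. by []. Qed.
Lemma algR_le (x y : algR) : (x <= y) = (algRval x <= algRval y).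
Proof. by []. Qed.

Lemma part2 (m : nat) (rho r' : algC) : 0 <= rho ->
  rho ^+ 2 - 3 / 2 * rho < 18 -> (24 <= m)%N -> is_rho' m r' -> rho < r'.
Proof.
move=> rho0 H1 m24 [r'R _ r'max].
have rhoR : rho \is Creal by apply: ger0_real.
pose R := in_algR rhoR.
have HR : R ^+ 2 - 3 / 2 * R < 18.
  rewrite algR_lt !(rmorphB, rmorphM, rmorphXn, fmorph_div, rmorph_nat) /=; by rewrite -expr2.
have R0 : 0 <= R by rewrite algR_le.
have R5 : R < 21 / 4 by nra.
pose M : algR := m%:R.
have M24 : 24 <= M by rewrite /M (ler_nat algR 24 m).
pose q : {poly algR} := 'X^4 - M *: 'X^2 - (M - 2) *: 'X + (M / 2 - 1)%:P.
have qE : forall y : algR, (pm m).[algRval y] = algRval q.[y].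
  move=> y; rewrite /pm /q !hornerE /= !(rmorphB, rmorphD, rmorphM, rmorphXn, fmorph_div, rmorph_nat) /=.
  ring.
have [x /andP [ax xb] rx] : exists2 x : algR, (21/4 <= x <= M) & root q x.
  apply: (@algR_rcfMixin q (21/4) M); first by lra.
  rewrite !hornerE /=; apply/andP; split.
    lra.
  nra.
have xR : algRval x \is Creal := algRvalP x.
have rx' : root (pm m) (algRval x) by rewrite /root qE (rootP rx) rmorph0.
have := r'max _ xR rx'.
apply: lt_le_trans.
have : R < x by apply: lt_le_trans ax.
by rewrite algR_lt.
Qed.

Theorem proposition7p1 (n : nat) (adj : rel 'I_n) (rho : algC) (u : 'I_n) :
  simple_graph adj ->
  H43_free adj ->
  is_spectral_radius adj rho ->
  let N := nbhd adj u in
  let W := ~: (u |: N) in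
  let Ap := [set v in N | [exists w in N, adj v w]] in
  induces_K4 adj Ap ->
  edges_in adj W = 2%N ->
  (forall w, w \in W ->
     (#|[set a in Ap | adj w a]| <= 1)%N /\ (exists2 w', w' \in W & adj w w')) ->
  rho ^+ 2 - rho * ((edges_in adj Ap)%:R - (#|Ap|)%:R + 3 / 2 - (edges_in adj W)%:R)
    < 2 * (edges_in adj Ap)%:R + (#|Ap|)%:R + (edges_between adj Ap W)%:R ->
  rho ^+ 2 - 3 / 2 * rho < 18 /\
  (forall r' : algC, ~~ odd (nedges adj) -> (24 <= nedges adj)%N ->
     is_rho' (nedges adj) r' -> rho < r').
Proof.
move=> [sym irr] Hf [[l _ hl] _] N W Ap K eW hW H.
have rho0 : 0 <= rho by rewrite -hl normr_ge0.
have disj : forall x, x \in W -> x \notin Ap.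
  move=> x; rewrite /W /Ap /N !inE negb_or => /andP [_ xN].
  by apply/negP => /andP [xN' _]; rewrite xN' in xN.
have eA := @edges_K4 _ adj Ap K.
have cA : #|Ap| = 4%N by case: K.
have eAW := @eAW_le _ adj Ap W sym irr Hf K disj eW hW.
have H1 : rho ^+ 2 - 3 / 2 * rho < 18.
  move: H; rewrite eA cA eW.
  set e := edges_between adj Ap W.
  have -> : rho ^+ 2 - rho * (6%:R - 4%:R + 3 / 2 - 2%:R) = rho ^+ 2 - 3 / 2 * rho by ring.
  have -> : 2 * 6%:R + 4%:R + e%:R = (16 + e)%:R :> algC by rewrite natrD; ring.
  move=> /lt_le_trans; apply.
  by rewrite (ler_nat algC (16 + e) 18); lia.
split => // r' _ m24 hr.
exact: part2 rho0 H1 m24 hr.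
Qed.
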